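(* Let $L$ be a layout. There exists a nested tuple morphism $f$ with $L_f=L$ if and only if $L$ is tractable.
   Context: A nested tuple (of positive integers) is a positive integer or a finite tuple of nested tuples; its flattening $X^\flat$ is the tuple of integer leaves left to right, $\mathrm{len}(X)$ its length and $\mathrm{entry}_i(X)$ its $i$-th entry. Congruent nested tuples share the same nesting pattern. A layout is $L=S:D$ with $S$ (positive entries) and $D$ (nonnegative entries) congruent nested tuples; $L^\flat=S^\flat:D^\flat$. $\langle n\rangle_*=\{*,1,\dots,n\}$. A nested tuple morphism $f:S\to T$ is given by a pointed map $\alpha:\langle\mathrm{len}(S)\rangle_*\to\langle\mathrm{len}(T)\rangle_*$ ($\alpha( * )=*$) such that each $j\ne*$ has at most one preimage and $\mathrm{entry}_i(S)=\mathrm{entry}_{\alpha(i)}(T)$ whenever $\alpha(i)\ne*$. With $T^\flat=(t_1,\dots,t_n)$, the encoded layout $L_f$ has shape $S$ and stride congruent to $S$ whose $i$-th flattened entry is $0$ if $\alpha(i)=*$ and $\prod_{j<\alpha(i)}t_j$ otherwise. Order pairs by $s:d\preceq s':d'$ iff $d<d'$ or ($d=d'$ and $s\le s'$); for a flat layout, $\mathrm{sort}$ stably reorders its modes into $\preceq$-nondecreasing order. A layout $L$ is tractable if, writing $\mathrm{sort}(L^\flat)=(s_1,\dots,s_m):(d_1,\dots,d_m)$, for each $1\le i<m$ either $d_i=0$ or $s_id_i$ divides $d_{i+1}$. *)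

(* Defs.v *)
From mathcomp Require Import all_boot.
Set Implicit Arguments. Unset Strict Implicit. Unset Printing Implicit Defensive.

(* Nested tuples: a (natural-number) leaf or a finite tuple of nested tuples.
   Positivity of leaves is imposed separately by [pos_ntuple]. *)
Inductive ntuple : Type :=
| NLeaf of nat
| NNode of seq ntuple.

Fixpoint flat (x : ntuple) : seq nat :=
  match x with
  | NLeaf n => [:: n]
  | NNode xs => flatten (map flat xs)
  end.

Definition len (x : ntuple) : nat := size (flat x).

Fixpoint pattern (x : ntuple) : ntuple :=
  match x with
  | NLeaf _ => NLeaf 0
  | NNode xs => NNode (map pattern xs)
  end.

Definition congruent (x y : ntuple) : Prop := pattern x = pattern y.

Definition pos_ntuple (x : ntuple) : bool := all (fun n => 0 < n) (flat x).

Fixpoint relabel_aux (x : ntuple) (l : seq nat) : ntuple * seq nat :=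
  match x with
  | NLeaf _ => (NLeaf (head 0 l), behead l)
  | NNode xs =>
      let fix go (xs : seq ntuple) (l : seq nat) : seq ntuple * seq nat :=
        match xs with
        | [::] => ([::], l)
        | y :: ys =>
            let (y', l') := relabel_aux y l in
            let (ys', l'') := go ys l' in (y' :: ys', l'')
        end in
      let (xs', l') := go xs l in (NNode xs', l')
  end.

Definition relabel (x : ntuple) (l : seq nat) : ntuple := (relabel_aux x l).1.

Record layout := Layout { lshape : ntuple; lstride : ntuple }.

Definition is_layout (L : layout) : Prop :=
  pos_ntuple (lshape L) /\ congruent (lshape L) (lstride L).

(* nested tuple morphism S -> T given by a pointed map
   <len S>_* -> <len T>_*, encoded as 'I_(len S) -> option 'I_(len T)
   (None = *, indices are 0-based). *)
Definition is_morphism (S T : ntuple) (alpha : 'I_(len S) -> option 'I_(len T)) : Prop :=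
  (forall i j k, alpha i = Some k -> alpha j = Some k -> i = j) /\
  (forall i k, alpha i = Some k -> nth 0 (flat S) i = nth 0 (flat T) k).

Definition enc_stride (S T : ntuple) (alpha : 'I_(len S) -> option 'I_(len T))
  (i : 'I_(len S)) : nat :=
  match alpha i with
  | None => 0
  | Some k => \prod_(t <- take k (flat T)) t
  end.

Definition encoded_layout (S T : ntuple) (alpha : 'I_(len S) -> option 'I_(len T)) : layout :=
  Layout S (relabel S [seq enc_stride alpha i | i : 'I_(len S)]).

(* s:d <= s':d' iff d < d' or (d = d' and s <= s') ; pairs are (s, d) *)
Definition mode_le (a b : nat * nat) : bool :=
  (a.2 < b.2) || ((a.2 == b.2) && (a.1 <= b.1)).

Definition sorted_modes (L : layout) : seq (nat * nat) :=
  sort mode_le (zip (flat (lshape L)) (flat (lstride L))).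

Definition tractable (L : layout) : Prop :=
  let p := sorted_modes L in
  forall i, i.+1 < size p ->
    (nth (0, 0) p i).2 = 0 \/
    ((nth (0, 0) p i).1 * (nth (0, 0) p i).2 %| (nth (0, 0) p i.+1).2).

(* Main.v *)
Require Import Defs.
From mathcomp Require Import all_boot.
From Stdlib Require List.

Fixpoint goF (xs : seq ntuple) (l : seq nat) : seq ntuple * seq nat :=
  match xs with
  | [::] => ([::], l)
  | y :: ys =>
      let (y', l') := relabel_aux y l in
      let (ys', l'') := goF ys l' in (y' :: ys', l'')
  end.

Lemma relabel_node xs l :
  relabel_aux (NNode xs) l = let (xs', l') := goF xs l in (NNode xs', l').
Proof. reflexivity. Qed.

Section Ind.
Variable P : ntuple -> Prop.
Hypothesis HL : forall n, P (NLeaf n).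
Hypothesis HN : forall xs, List.Forall P xs -> P (NNode xs).
Fixpoint ntuple_ind2 (x : ntuple) : P x :=
  match x with
  | NLeaf n => HL n
  | NNode xs => @HN xs ((fix G (xs : seq ntuple) : List.Forall P xs :=
       match xs with
       | [::] => List.Forall_nil P
       | y :: ys => @List.Forall_cons _ P y ys (ntuple_ind2 y) (G ys)
       end) xs)
  end.
End Ind.

Lemma len_pattern x : len (pattern x) = len x.
Proof.
elim/ntuple_ind2: x => [n|xs IH] //.
rewrite /len /=; elim: IH => //= y ys Hy _ IH.
rewrite !size_cat.
move: Hy; rewrite /len => ->.
by rewrite IH.
Qed.

Lemma relabel_spec x l : len x <= size l ->
  [/\ (relabel_aux x l).2 = drop (len x) l,
      flat (relabel_aux x l).1 = take (len x) l &
      pattern (relabel_aux x l).1 = pattern x].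
Proof.
elim/ntuple_ind2: x l => [n|xs IH] l.
  by case: l => //= a l _; rewrite drop0 take0.
rewrite relabel_node /len /=.
elim: IH l => [|y ys Hy _ IH] l /=.
  by rewrite drop0 take0.
rewrite size_cat => Hs.
have Hy' : len y <= size l by apply: leq_trans Hs; rewrite /len leq_addr.
case: (Hy l Hy') => H1 H2 H3.
destruct (relabel_aux y l) as [y' l'] eqn:E.
rewrite /= in H1 H2 H3; subst l'.
have Hys : size (flatten [seq flat i | i <- ys]) <= size (drop (len y) l).
  by rewrite size_drop leq_subRL // -/(len y).
case: (IH _ Hys) => G1 G2 G3.
destruct (goF ys (drop (len y) l)) as [ys' l''] eqn:E2.
rewrite /= in G1 G2 G3 *.
rewrite G1 drop_drop addnC H2 G2 -takeD H3; split => //.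
by case: G3 => ->.
Qed.

Lemma ntuple_eq x y : pattern x = pattern y -> flat x = flat y -> x = y.
Proof.
elim/ntuple_ind2: x y => [n|xs IH] [m|ys] //=.
  by move=> _ [->].
case=> Hp Hf; congr NNode.
elim: IH ys Hp Hf => [|x xs0 Hx _ IH] [|y ys] //= [Hp1 Hp2] Hf.
have Hs : len x = len y by rewrite -[len x]len_pattern -[len y]len_pattern Hp1.
move/eqP: Hf; rewrite eqseq_cat // => /andP [/eqP H1 /eqP H2].
by rewrite (Hx _ Hp1 H1) (IH _ Hp2 H2).
Qed.
Lemma relabel_flat x y : congruent x y -> relabel x (flat y) = y.
Proof.
rewrite /congruent => Hc.
have Hl : len x = size (flat y).
  by rewrite -[len x]len_pattern Hc len_pattern.
have [_ H2 H3] := @relabel_spec x (flat y) (eq_leq Hl).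
apply: ntuple_eq.
  by rewrite /relabel H3.
by rewrite /relabel H2 Hl take_size.
Qed.

Lemma relabel_flat2 x l : size l = len x -> flat (relabel x l) = l.
Proof.
move=> Hl; have [_ H2 _] := @relabel_spec x l (eq_leq (esym Hl)).
by rewrite /relabel H2 -Hl take_size.
Qed.

Lemma zip_iota (s t : seq nat) : size s = size t ->
  zip s t = map (fun i => (nth 0 s i, nth 0 t i)) (iota 0 (size s)).
Proof.
move=> H; apply: (@eq_from_nth _ (0,0)).
  by rewrite size_zip size_map size_iota H minnn.
move=> i; rewrite size_zip H minnn => Hi.
by rewrite nth_zip // (nth_map 0) ?size_iota ?H // nth_iota ?H.
Qed.


Definition P (t : seq nat) k := \prod_(x <- take k t) x.

Lemma P_split t k j : P t (k + j) = P t k * \prod_(x <- take j (drop k t)) x.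
Proof. by rewrite /P takeD big_cat. Qed.

Lemma P_succ t k : k < size t -> P t k.+1 = P t k * nth 0 t k.
Proof. by move=> H; rewrite /P (take_nth 0 H) -cats1 big_cat big_seq1. Qed.

Lemma prod_pos (s : seq nat) : all (fun n => 0 < n) s -> 0 < \prod_(x <- s) x.
Proof. elim: s => [|a s IH] /=; first by rewrite big_nil. by move=> /andP [Ha Hs]; rewrite big_cons muln_gt0 Ha IH. Qed.

Lemma all_take (s : seq nat) k : all (fun n => 0 < n) s -> all (fun n => 0 < n) (take k s).
Proof. by move=> H; apply/allP => x /mem_take Hx; apply: (allP H). Qed.
Lemma all_drop (s : seq nat) k : all (fun n => 0 < n) s -> all (fun n => 0 < n) (drop k s).
Proof. by move=> H; apply/allP => x /mem_drop Hx; apply: (allP H). Qed.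

Lemma key (t : seq nat) k k' : all (fun n => 0 < n) t -> k < size t -> k' < size t ->
  k != k' -> mode_le (nth 0 t k, P t k) (nth 0 t k', P t k') ->
  nth 0 t k * P t k %| P t k'.
Proof.
move=> Ht Hk Hk' Hne; rewrite /mode_le /=.
have Ptk : 0 < nth 0 t k by apply: (allP Ht); apply: mem_nth.
case: (ltngtP k k') Hne => // Hlt _.
  rewrite mulnC -P_succ // -(subnKC Hlt) P_split; by rewrite dvdn_mulr.
move=> H.
set Q := \prod_(x <- take (k - k'.+1) (drop k'.+1 t)) x.
have EP : P t k = P t k' * (nth 0 t k' * Q).
  by rewrite -(subnKC Hlt) P_split P_succ // mulnA.
have Pk' : 0 < P t k' by apply: prod_pos; apply: all_take.
have Qp : 0 < Q by apply: prod_pos; apply: all_take; apply: all_drop.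
have Ptk' : 0 < nth 0 t k' by apply: (allP Ht); apply: mem_nth.
have Hle : P t k' <= P t k by rewrite EP leq_pmulr // muln_gt0 Ptk' Qp.
case/orP: H => [H|/andP [/eqP Heq Hle2]].
  by move: (leq_ltn_trans Hle H); rewrite ltnn.
move: Heq; rewrite EP -{2}(muln1 (P t k')) => /eqP; rewrite eqn_pmul2l // muln_eq1 => /andP [/eqP E1 /eqP E2].
rewrite E1 in Hle2.
have -> : nth 0 t k = 1 by apply/eqP; rewrite eqn_leq Hle2 Ptk.
by rewrite E1 E2 !mul1n muln1.
Qed.

Lemma mode_le_total : total mode_le.
Proof.
move=> [a b] [c d]; rewrite /mode_le /=.
case: (ltngtP b d) => //= Hbd; exact: leq_total.
Qed.

Lemma mode_le_trans : transitive mode_le.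
Proof.
move=> [a b] [c d] [e f]; rewrite /mode_le /=.
case/orP=> [H1|/andP [/eqP E1 H1]]; case/orP=> [H2|/andP [/eqP E2 H2]].
- by rewrite (ltn_trans H1 H2).
- by rewrite -E2 H1.
- by rewrite E1 H2.
- by rewrite E1 E2 eqxx (leq_trans H1 H2) orbT.
Qed.

Lemma mode_le_refl : reflexive mode_le.
Proof. by move=> [a b]; rewrite /mode_le /= eqxx leqnn orbT. Qed.

Lemma sort_facts (g : nat -> nat * nat) n :
  let q := sort (relpre g mode_le) (iota 0 n) in
  [/\ sort mode_le (map g (iota 0 n)) = map g q, uniq q, size q = n,
      forall x, (x \in q) = (x < n) &
      forall i j, i <= j -> j < n -> mode_le (g (nth 0 q i)) (g (nth 0 q j))].
Proof.
move=> q; split.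
- exact: sort_map.
- by rewrite sort_uniq iota_uniq.
- by rewrite size_sort size_iota.
- by move=> x; rewrite mem_sort mem_iota.
move=> i j Hij Hj.
have Hs : sorted mode_le (map g q).
  rewrite -sort_map; apply: sort_sorted; exact: mode_le_total.
have Hsz : size q = n by rewrite size_sort size_iota.
have := @sorted_leq_nth _ mode_le mode_le_trans mode_le_refl (0,0) _ Hs i j.
rewrite !inE !size_map Hsz (leq_ltn_trans Hij Hj) Hj => /(_ isT isT Hij).
by rewrite !(nth_map 0) ?Hsz // (leq_ltn_trans Hij Hj).
Qed.


Lemma nth_encE S T (alpha : 'I_(len S) -> option 'I_(len T)) (i : 'I_(len S)) :
  nth 0 [seq enc_stride alpha i | i : 'I_(len S)] i = enc_stride alpha i.
Proof. by rewrite (nth_map i) ?size_enum_ord // nth_ord_enum. Qed.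

Lemma size_enc S T (alpha : 'I_(len S) -> option 'I_(len T)) :
  size [seq enc_stride alpha i | i : 'I_(len S)] = len S.
Proof. by rewrite size_map size_enum_ord. Qed.

Lemma forward S T (alpha : 'I_(len S) -> option 'I_(len T)) :
  pos_ntuple S -> pos_ntuple T -> is_morphism alpha -> tractable (encoded_layout alpha).
Proof.
move=> HS HT [Hinj Hent].
rewrite /tractable /sorted_modes /encoded_layout /=.
set E := [seq enc_stride alpha i | i : 'I_(len S)].
rewrite relabel_flat2 ?size_enc //.
rewrite zip_iota; last by rewrite size_enc.
set g := fun i => _.
have [-> Hu Hsz Hmem Hle] := sort_facts g (size (flat S)).
set q := sort _ _.
rewrite size_map Hsz => i Hi.
have Hi' : i < size q by rewrite Hsz ltnW.
have Hi1 : i.+1 < size q by rewrite Hsz.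
rewrite !(nth_map 0) //.
set a := nth 0 q i; set b := nth 0 q i.+1.
have Ha : a < len S by rewrite -Hmem mem_nth.
have Hb : b < len S by rewrite -Hmem mem_nth.
have Hab : a != b by rewrite /a /b nth_uniq // eqn_leq ltnn andbF.
have Hm := Hle i i.+1 (leqnSn i) Hi.
rewrite -/a -/b in Hm.
have Ega : g a = (nth 0 (flat S) a, enc_stride alpha (Ordinal Ha)).
  by rewrite /g /= -(@nth_encE S T alpha (Ordinal Ha)).
have Egb : g b = (nth 0 (flat S) b, enc_stride alpha (Ordinal Hb)).
  by rewrite /g /= -(@nth_encE S T alpha (Ordinal Hb)).
rewrite Ega Egb /= in Hm *.
rewrite /enc_stride in Hm *.
case Ea: (alpha (Ordinal Ha)) Hm => [k|]; last by left.
move=> Hm; right.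
have Pk : 0 < P (flat T) k.
  by apply: prod_pos; apply: all_take.
case Eb: (alpha (Ordinal Hb)) => [k'|].
  have Hkk : k != k'.
    apply/eqP => Ekk; subst k'.
    by move: (Hinj _ _ _ Ea Eb) => [] /eqP; rewrite (negbTE Hab).
  have E1 : nth 0 (flat S) a = nth 0 (flat T) k := Hent _ _ Ea.
  have E2 : nth 0 (flat S) b = nth 0 (flat T) k' := Hent _ _ Eb.
  rewrite E1 E2 in Hm *.
  by rewrite Eb in Hm; apply: key => //; exact Hm.
move: Hm; rewrite Eb /mode_le /= => /andP [/eqP E0 _].
by move: Pk; rewrite /P E0.
Qed.


Lemma mode_le_snd x y : mode_le x y -> x.2 <= y.2.
Proof. by rewrite /mode_le => /orP [/ltnW|/andP [/eqP -> _]]. Qed.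

Lemma insub_some n x (k : 'I_n) : insub x = Some k -> val k = x.
Proof. by case: insubP => // k' _ <- [] ->. Qed.

Lemma P_mkseq f N k : k <= N -> P (mkseq f N) k = \prod_(0 <= i < k) f i.
Proof.
move=> H; rewrite /P /mkseq -map_take take_iota (minn_idPl H) big_map.
by rewrite /index_iota subn0.
Qed.

Lemma backward L : is_layout L -> tractable L ->
  exists (S T : ntuple) (alpha : 'I_(len S) -> option 'I_(len T)),
      [/\ pos_ntuple S, pos_ntuple T, is_morphism alpha &
          encoded_layout alpha = L].
Proof.
case: L => S D [/= HS Hc] Htr.
rewrite /tractable /sorted_modes /= in Htr.
have HD : size (flat D) = len S.
  by rewrite -[len S]len_pattern Hc len_pattern.
rewrite zip_iota ?HD // in Htr.
set g := fun i => _ in Htr.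
have [Es Hu Hsz Hmem Hle] := sort_facts g (size (flat S)).
rewrite Es in Htr.
set q := sort _ _ in Hu Hsz Hmem Hle Htr.
set dv := fun i => nth 0 (flat D) i.
set sv := fun i => nth 0 (flat S) i.
set z := find (fun a => dv a != 0) q.
set u := drop z q.
set r := size u.
have Hr : r = size q - z by rewrite /r size_drop.
have F1 : forall j, j < r -> dv (nth 0 u j) != 0.
  move=> j Hj; rewrite /u nth_drop.
  have Hz : z < size q by rewrite -subn_gt0 -Hr; apply: leq_ltn_trans Hj.
  have Hf : dv (nth 0 q z) != 0.
    by apply: (@nth_find _ 0 (fun a => dv a != 0)); rewrite has_find.
  have Hzj : z + j < size (flat S) by rewrite -Hsz -ltn_subRL -Hr.
  have := @mode_le_snd _ _ (Hle z (z + j) (leq_addr _ _) Hzj).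
  rewrite /g /= -/(dv _) -/(dv _).
  by move: Hf; rewrite -!lt0n => Hf Hl; apply: leq_trans Hl.
have F2 : forall a, a < len S -> a \notin u -> dv a = 0.
  move=> a Ha Hau.
  have : a \in take z q ++ u by rewrite cat_take_drop Hmem.
  rewrite mem_cat (negbTE Hau) orbF => Hat.
  have Hi := Hat; rewrite -index_mem in Hi.
  have Hiz : index a (take z q) < z by apply: (leq_trans Hi); rewrite size_take; case: ltnP => // /ltnW.
  have := @before_find _ 0 (fun a => dv a != 0) q _ Hiz.
  rewrite -(nth_take 0 Hiz) nth_index //.
  by move/negbFE/eqP.
have F3 : forall j, j.+1 < r -> sv (nth 0 u j) * dv (nth 0 u j) %| dv (nth 0 u j.+1).
  move=> j Hj.
  have Hzj : (z + j).+1 < size (map g q) by rewrite size_map -addnS -ltn_subRL -Hr.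
  have := Htr _ Hzj.
  have Hq1 : (z + j).+1 < size q by rewrite -(size_map g).
  have Hq0 : z + j < size q by apply: ltnW.
  rewrite !(nth_map 0) //.
  rewrite -addnS /g /= -!nth_drop -/u -/(dv _) -/(dv _) -/(sv _).
  case => // /eqP; rewrite (negbTE (F1 j _)) //; exact: ltnW.
have Hun : uniq u by rewrite /u drop_uniq.
have Hul : forall j, j < r -> nth 0 u j < len S.
  by move=> j Hj; rewrite /len -Hmem; apply: (mem_drop (n0:=z)); rewrite mem_nth.
have Hsv : forall a, a < len S -> 0 < sv a.
  by move=> a Ha; apply: (allP HS); rewrite mem_nth.
pose c j := if j is j'.+1 then dv (nth 0 u j) %/ (sv (nth 0 u j') * dv (nth 0 u j'))
            else dv (nth 0 u 0).
pose f m := if odd m then sv (nth 0 u m./2) else c m./2.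
pose tl := mkseq f r.*2.
pose T := NNode (map NLeaf tl).
have flatT : flat T = tl.
  by rewrite /T /=; elim: (tl) => //= x s ->.
have lenT : len T = r.*2 by rewrite /len flatT size_mkseq.
have fodd : forall j, f j.*2.+1 = sv (nth 0 u j).
  by move=> j; rewrite /f /= odd_double /= uphalf_double.
have feven : forall j, f j.*2 = c j.
  by move=> j; rewrite /f odd_double doubleK.
have Hcp : forall j, j < r -> 0 < c j.
  case=> [|j] Hj /=; first by rewrite lt0n F1.
  have H3 := F3 _ Hj.
  have Hp : 0 < sv (nth 0 u j) * dv (nth 0 u j).
    by rewrite muln_gt0 Hsv ?Hul ?lt0n ?F1 // ltnW.
  by rewrite divn_gt0 // dvdn_leq // lt0n F1.
have Hf : forall m, m < r.*2 -> 0 < f m.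
  move=> m Hm; rewrite /f; case: ifP => Ho.
    apply: Hsv; apply: Hul; rewrite -ltn_double; apply: leq_ltn_trans Hm.
    by rewrite -{2}(odd_double_half m) Ho leqnSn.
  apply: Hcp; rewrite -ltn_double; apply: leq_ltn_trans Hm.
  by rewrite -{2}(odd_double_half m) Ho.
have PT : forall j, j < r -> P tl j.*2.+1 = dv (nth 0 u j).
  elim=> [|j IH] Hj.
    by rewrite P_mkseq ?big_nat1 // -[r.*2]addnn addn_gt0 Hj.
  rewrite P_mkseq; last by rewrite ltn_double.
  rewrite doubleS big_nat_recr // big_nat_recr //= -(@P_mkseq f r.*2 j.*2.+1); last by rewrite ltn_double ltnW.
  rewrite IH ?(ltnW Hj) // fodd -doubleS feven /=.
  by rewrite [dv _ * _]mulnC mulnC divnK // F3.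
pose alpha (a : 'I_(len S)) : option 'I_(len T) := insub (index (val a) u).*2.+1.
have Hidx : forall (a : 'I_(len S)) (k : 'I_(len T)), alpha a = Some k ->
    val k = (index (val a) u).*2.+1 /\ index (val a) u < r.
  move=> a k /insub_some Hk; split => //.
  by rewrite -ltn_Sdouble -Hk -lenT ltn_ord.
have Henc : forall a : 'I_(len S), enc_stride alpha a = dv a.
  move=> a; rewrite /enc_stride.
  case E: (alpha a) => [k|].
    have [Hk Hi] := Hidx _ _ E.
    rewrite flatT -/(P tl k) Hk PT // nth_index //.
    by rewrite -index_mem.
  apply/esym/F2; first exact: ltn_ord.
  apply/negP; rewrite -index_mem => Hi.
  move: E; rewrite /alpha; case: insubP => [k _ _ //|]; by rewrite lenT ltn_Sdouble Hi.
exists S, T, alpha; split => //.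
- apply/allP => x; rewrite flatT /tl /mkseq => /mapP [m]; rewrite mem_iota => /andP [_ Hm] ->.
  exact: Hf.
- split.
    move=> a b k Ea Eb.
    have [Ha Hai] := Hidx _ _ Ea; have [Hb Hbi] := Hidx _ _ Eb.
    apply: val_inj.
    rewrite -(nth_index 0 (x:=val a) (s:=u)) -?index_mem //.
    rewrite -(nth_index 0 (x:=val b) (s:=u)) -?index_mem //.
    by rewrite Ha in Hb; move: Hb => [] /double_inj ->.
  move=> a k E; have [Hk Hi] := Hidx _ _ E.
  rewrite flatT Hk /tl nth_mkseq ?ltn_Sdouble // fodd nth_index //.
  by rewrite -index_mem.
rewrite /encoded_layout; congr Layout.
have -> : [seq enc_stride alpha i | i : 'I_(len S)] = flat D.
  apply: (@eq_from_nth _ 0); first by rewrite size_enc HD.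
  move=> i; rewrite size_enc => Hi.
  by rewrite -[i]/(val (Ordinal Hi)) nth_encE Henc.
exact: relabel_flat.
Qed.


Theorem mainTheorem9 (L : layout) (HL : is_layout L) :
  (exists (S T : ntuple) (alpha : 'I_(len S) -> option 'I_(len T)),
      [/\ pos_ntuple S, pos_ntuple T, is_morphism alpha &
          encoded_layout alpha = L])
  <-> tractable L.
Proof.
split.
  by case=> S [T [alpha [HS HT Hm <-]]]; apply: forward.
exact: backward.
Qed.
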